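(* Let $X=\{a_1,\dots,a_\ell\}$ be a finite set of $\ell$ distinct points, $N\ge2$, and $\lambda_*\in\mathcal{P}(X)$. (a) Let $\mathcal{P}_{SAE,\lambda_*}(X^N)$ be the set of probability measures on $X^N$ of the form $\sum_{\lambda\in\mathcal{P}_{\frac1N}(X)}\alpha_\lambda\psi_N(\lambda)$, where $(\alpha_\lambda)$ is a probability vector on $\mathcal{P}_{\frac1N}(X)$ with $\sum_\lambda\alpha_\lambda\lambda=\lambda_*$ and with $\alpha_\lambda>0$ for at most $\ell$ elements $\lambda$. Let $\mathcal{P}_{sym,\lambda_*}(X^N)=\{\gamma\in\mathcal{P}_{sym}(X^N):M_1\gamma=\lambda_*\}$. Then every extreme point of $\mathcal{P}_{sym,\lambda_*}(X^N)$ lies in $\mathcal{P}_{SAE,\lambda_*}(X^N)$, and $\mathcal{P}_{SAE,\lambda_*}(X^N)\subseteq\mathcal{P}_{sym,\lambda_*}(X^N)$. (b) Let $\mathcal{P}_{N,SAE,\lambda_*}(X^2)$ be the set of probability measures on $X^2$ of the form $\sum_{\lambda\in\mathcal{P}_{\frac1N}(X)}\alpha_\lambda\varphi_N(\lambda)$ with $(\alpha_\lambda)$ as in (a). Let $\mathcal{P}_{N\text{-}rep,\lambda_*}(X^2)=\{\mu\in\mathcal{P}_{N\text{-}rep}(X^2):M_1\mu=\lambda_*\}$. Then every extreme point of $\mathcal{P}_{N\text{-}rep,\lambda_*}(X^2)$ lies in $\mathcal{P}_{N,SAE,\lambda_*}(X^2)$, and $\mathcal{P}_{N,SAE,\lam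bda_*}(X^2)\subseteq\mathcal{P}_{N\text{-}rep,\lambda_*}(X^2)$.
   Context: $\mathcal{P}(X)$ denotes probability measures on $X$, identified with vectors $(\lambda_i)$, $\lambda_i=\lambda(\{a_i\})$; $\delta_i$ is the Dirac measure at $a_i$; $\mathcal{P}_{\frac1N}(X)=\{\lambda\in\mathcal{P}(X):\lambda_i\in\frac1N\mathbb{Z}\ \forall i\}$. The symmetrization operator is $(S\gamma)(A_1\times\cdots\times A_N)=\frac1{N!}\sum_{\sigma\in S_N}\gamma(A_{\sigma(1)}\times\cdots\times A_{\sigma(N)})$; $\mathcal{P}_{sym}(X^N)$ is the set of probability measures $\gamma$ on $X^N$ with $S\gamma=\gamma$; $M_1$ denotes the one-point marginal, $(M_1\gamma)(A)=\gamma(A\times X^{N-1})$ (and for $\mu$ on $X^2$, $(M_1\mu)(A)=\mu(A\times X)$). A probability measure $\mu$ on $X^2$ is $N$-representable if $\mu(A)=\gamma(A\times X^{N-2})$ for all $A\subseteq X^2$ for some $\gamma\in\mathcal{P}_{sym}(X^N)$; $\mathcal{P}_{N\text{-}rep}(X^2)$ is the set of these. For $\lambda\in\mathcal{P}_{\frac1N}(X)$, $\psi_N(\lambda)=S(\delta_{a_{i_1}}\otimes\cdots\otimes\delta_{a_{i_N}})$ where $i_1\le\dots\le i_N$ is the nondecreasing index sequence in which each $i$ appears exactly $N\lambda_i$ times, and $\varphi_N(\lambda)=\lambda\otimes\lambda+\frac1{N-1}\big(\lambda\otimes\lambda-\sum_{i=1}^\ell\lambda_i\delta_i\otimes\delta_i\big)$.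 *)

(* Defs.v *)
From HB Require Import structures.
From mathcomp Require Import all_boot all_order all_algebra.
From mathcomp Require Import fingroup perm.
From mathcomp Require Import reals.
Set Implicit Arguments. Unset Strict Implicit. Unset Printing Implicit Defensive.
Import Order.TTheory GRing.Theory Num.Theory.
Local Open Scope ring_scope.

(* X = {a_1,...,a_l} is represented by the index type 'I_l (a_i <-> i).
   A point of X^N is a function 'I_N -> 'I_l; a measure on a finite set T
   is given by its point masses, a finite function T -> R. *)

Section Defs.
Variable R : realType.

Definition cfg (l N : nat) := {ffun 'I_N -> 'I_l}.

Definition isProb (T : finType) (p : {ffun T -> R}) : Prop :=
  (forall x, 0 <= p x) /\ \sum_x p x = 1.

(* "the k-th coordinate (0-based) of x equals a" *)
Definition coordIs (l N : nat) (x : cfg l N) (k : nat) (a : 'I_l) : bool :=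
  [exists i : 'I_N, (val i == k) && (x i == a)].

Definition M1 (l N : nat) (g : {ffun cfg l N -> R}) : {ffun 'I_l -> R} :=
  [ffun a => \sum_(x : cfg l N | coordIs x 0 a) g x].

Definition M2 (l N : nat) (g : {ffun cfg l N -> R}) : {ffun 'I_l * 'I_l -> R} :=
  [ffun p => \sum_(x : cfg l N | coordIs x 0 p.1 && coordIs x 1 p.2) g x].

Definition M1two (l : nat) (mu : {ffun 'I_l * 'I_l -> R}) : {ffun 'I_l -> R} :=
  [ffun a => \sum_(b : 'I_l) mu (a, b)].

Definition symmetrize (l N : nat) (g : {ffun cfg l N -> R}) : {ffun cfg l N -> R} :=
  [ffun x : cfg l N => (N`!%:R)^-1 * \sum_(s : 'S_N) g [ffun i => x (s i)]].

Definition Psym (l N : nat) (g : {ffun cfg l N -> R}) : Prop :=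
  isProb g /\ symmetrize g = g.

Definition Psym_at (l N : nat) (ls : {ffun 'I_l -> R}) (g : {ffun cfg l N -> R}) : Prop :=
  Psym g /\ M1 g = ls.

Definition Nrep (l N : nat) (mu : {ffun 'I_l * 'I_l -> R}) : Prop :=
  isProb mu /\ exists g : {ffun cfg l N -> R}, Psym g /\ M2 g = mu.

Definition Nrep_at (l N : nat) (ls : {ffun 'I_l -> R}) (mu : {ffun 'I_l * 'I_l -> R}) : Prop :=
  Nrep N mu /\ M1two mu = ls.

Definition P1N (l N : nat) (lam : {ffun 'I_l -> R}) : Prop :=
  isProb lam /\ forall i, exists k : nat, lam i = k%:R / N%:R.

Definition mult (l N : nat) (lam : {ffun 'I_l -> R}) (i : 'I_l) : nat :=
  Num.truncn (lam i * N%:R).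

Definition sortedSeq (l N : nat) (lam : {ffun 'I_l -> R}) : seq 'I_l :=
  flatten [seq nseq (mult N lam i) i | i <- enum 'I_l].

Definition prodDirac (l N : nat) (s : seq 'I_l) : {ffun cfg l N -> R} :=
  [ffun x : cfg l N => if [seq x i | i <- enum 'I_N] == s then 1 else 0].

Definition psiN (l N : nat) (lam : {ffun 'I_l -> R}) : {ffun cfg l N -> R} :=
  symmetrize (prodDirac N (sortedSeq N lam)).

Definition phiN (l N : nat) (lam : {ffun 'I_l -> R}) : {ffun 'I_l * 'I_l -> R} :=
  [ffun p => lam p.1 * lam p.2
     + (N%:R - 1)^-1 * (lam p.1 * lam p.2 - (p.1 == p.2)%:R * lam p.1)].

(* admissible coefficients: alpha is a probability vector on P_{1/N}(X),
   supported on the duplicate-free list S of at most l elements of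
   P_{1/N}(X) (alpha vanishes off S), with barycenter ls. *)
Definition admissible (l N : nat) (ls : {ffun 'I_l -> R})
    (S : seq {ffun 'I_l -> R}) (alpha : {ffun 'I_l -> R} -> R) : Prop :=
  [/\ uniq S, (size S <= l)%N,
      forall lam, lam \in S -> P1N N lam /\ 0 <= alpha lam,
      \sum_(lam <- S) alpha lam = 1
    & forall i, \sum_(lam <- S) alpha lam * lam i = ls i].

Definition SAE_at (l N : nat) (ls : {ffun 'I_l -> R}) (g : {ffun cfg l N -> R}) : Prop :=
  exists S alpha, admissible N ls S alpha /\
    forall x, g x = \sum_(lam <- S) alpha lam * psiN N lam x.

Definition NSAE_at (l N : nat) (ls : {ffun 'I_l -> R}) (mu : {ffun 'I_l * 'I_l -> R}) : Prop :=
  exists S alpha, admissible N ls S alpha /\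
    forall p, mu p = \sum_(lam <- S) alpha lam * phiN N lam p.

Definition extreme (T : finType) (C : {ffun T -> R} -> Prop) (g : {ffun T -> R}) : Prop :=
  C g /\ forall g1 g2 t, C g1 -> C g2 -> 0 < t < 1 ->
    (forall x, g x = t * g1 x + (1 - t) * g2 x) -> g1 = g2.

End Defs.

(* Main.v *)
Require Import Defs.
From HB Require Import structures.
From mathcomp Require Import all_boot all_order all_algebra.
From mathcomp Require Import fingroup perm.
From mathcomp Require Import reals.
From mathcomp Require Import ring lra.
Set Implicit Arguments. Unset Strict Implicit. Unset Printing Implicit Defensive.
Import Order.TTheory GRing.Theory Num.Theory.
Local Open Scope ring_scope.
Section P1.
Variables (R : realType) (l N : nat).
Local Notation cf := (cfg l N).

Definition pc (x : cf) (s : 'S_N) : cf := [ffun i => x (s i)].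

Lemma pcM x s t : pc (pc x s) t = pc x (t * s)%g.
Proof. by apply/ffunP => i; rewrite !ffunE permM. Qed.

Lemma pc1 x : pc x 1 = x.
Proof. by apply/ffunP => i; rewrite !ffunE perm1. Qed.

Lemma pc_inj s : injective (pc ^~ s).
Proof.
move=> x y /(congr1 (pc ^~ (s^-1)%g)); rewrite !pcM mulVg !pc1 //.
Qed.

Definition invar (g : {ffun cf -> R}) := forall x s, g (pc x s) = g x.

Lemma symE (g : {ffun cf -> R}) x :
  symmetrize g x = (N`!%:R)^-1 * \sum_(s : 'S_N) g (pc x s).
Proof. by rewrite ffunE. Qed.

Lemma sym_invar g : invar (symmetrize g).
Proof.
move=> x t; rewrite !symE; f_equal.
rewrite [RHS](reindex_inj (mulIg t)) /=.
by apply: eq_bigr => s _; rewrite pcM.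
Qed.

Lemma fact_neq0 : (N`!%:R : R) != 0.
Proof. by rewrite pnatr_eq0 -lt0n fact_gt0. Qed.

Lemma sym_of_invar g : invar g -> symmetrize g = g.
Proof.
move=> Hg; apply/ffunP => x; rewrite symE.
under eq_bigr do rewrite Hg.
by rewrite sumr_const card_Sn -(mulr_natl (g x)) mulrA mulVf ?mul1r // fact_neq0.
Qed.

Lemma invar_of_sym g : symmetrize g = g -> invar g.
Proof. by move=> <-; apply: sym_invar. Qed.

Lemma sum_pc (G : cf -> R) s : \sum_x G (pc x s) = \sum_x G x.
Proof. by rewrite [RHS](reindex_inj (@pc_inj s)). Qed.

Lemma sum_invarF (g : {ffun cf -> R}) (F : cf -> R) s : invar g ->
  \sum_x g x * F (pc x s) = \sum_x g x * F x.
Proof.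
move=> Hg; rewrite [RHS](reindex_inj (@pc_inj s)) /=.
by apply: eq_bigr => x _; rewrite Hg.
Qed.

Lemma sum_sym (h : {ffun cf -> R}) (F : cf -> R) :
  (forall x s, F (pc x s) = F x) ->
  \sum_x symmetrize h x * F x = \sum_x h x * F x.
Proof.
move=> HF.
under eq_bigr do rewrite symE -mulrA mulr_suml.
rewrite -mulr_sumr exchange_big /=.
under eq_bigr => s _.
  rewrite -(sum_pc _ (s^-1)%g).
  under eq_bigr do rewrite pcM mulgV pc1 HF.
  over.
rewrite sumr_const card_Sn -(mulr_natl (\sum_x h x * F x)).
rewrite mulrA mulVf ?mul1r //.
by rewrite pnatr_eq0 -lt0n fact_gt0.
Qed.

Lemma sym_pre (h : {ffun cf -> R}) q :
  symmetrize [ffun y => h (pc y q)] = symmetrize h.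
Proof.
apply/ffunP => x; rewrite !symE; f_equal.
rewrite [RHS](reindex_inj (mulgI q)) /=.
by apply: eq_bigr => s _; rewrite ffunE pcM.
Qed.

End P1.
Arguments pc {l N}.
Lemma perm2 (T : finType) (i0 i1 k k' : T) : i0 != i1 -> k != k' ->
  exists p : {perm T}, p i0 = k /\ p i1 = k'.
Proof.
move=> Hi Hk.
exists (tperm i0 k * tperm (tperm i0 k i1) k')%g; rewrite !permM tpermL; split; last by rewrite tpermL.
rewrite tpermD //.
  by rewrite -[k in _ == k](tpermL i0 k) (inj_eq perm_inj) eq_sym.
by rewrite eq_sym.
Qed.

Section P2.
Variables (R : realType) (l N : nat).
Local Notation cf := (cfg l N).

Definition cntR (x : cf) (a : 'I_l) : R := \sum_i (x i == a)%:R.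

Lemma cntR_pc x s a : cntR (pc x s) a = cntR x a.
Proof.
rewrite /cntR [RHS](reindex_inj (@perm_inj _ s)) /=.
by apply: eq_bigr => i _; rewrite ffunE.
Qed.

Lemma coordIsE (x : cf) (i : 'I_N) a : coordIs x (val i) a = (x i == a).
Proof.
apply/existsP/idP => [[j /andP [/eqP/val_inj -> //]]|H].
by exists i; rewrite eqxx.
Qed.

Lemma M1E (g : {ffun cf -> R}) (i0 : 'I_N) a : val i0 = 0%N ->
  M1 g a = \sum_(x : cf) (x i0 == a)%:R * g x.
Proof.
move=> H0; rewrite ffunE big_mkcond; apply: eq_bigr => x _.
by rewrite -H0 coordIsE; case: (x i0 == a); rewrite ?mul1r ?mul0r.
Qed.

Lemma M2E (g : {ffun cf -> R}) (i0 i1 : 'I_N) a b : val i0 = 0%N -> val i1 = 1%N ->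
  M2 g (a, b) = \sum_(x : cf) ((x i0 == a) && (x i1 == b))%:R * g x.
Proof.
move=> H0 H1; rewrite ffunE big_mkcond; apply: eq_bigr => x _ /=.
by rewrite -H1 -H0 !coordIsE; case: (_ && _); rewrite ?mul1r ?mul0r.
Qed.

Lemma M1_invar (g : {ffun cf -> R}) (i0 : 'I_N) a : val i0 = 0%N -> invar g ->
  \sum_x g x * cntR x a = N%:R * M1 g a.
Proof.
move=> H0 Hg.
under eq_bigr do rewrite /cntR mulr_sumr.
rewrite exchange_big /=.
have E : forall k, \sum_(x : cf) g x * (x k == a)%:R = \sum_(x : cf) g x * (x i0 == a)%:R.
  move=> k; rewrite -(sum_invarF (fun y : cf => (y i0 == a)%:R) (tperm i0 k) Hg) /=.
  by apply: eq_bigr => x _; rewrite ffunE tpermL.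
under eq_bigr do rewrite E.
rewrite sumr_const card_ord (M1E g a H0) mulr_natl.
by congr (_ *+ _); apply: eq_bigr => x _; rewrite mulrC.
Qed.

Lemma cnt2E (x : cf) a b :
  cntR x a * cntR x b - (a == b)%:R * cntR x a =
  \sum_k \sum_(k' | k' != k) ((x k == a) && (x k' == b))%:R.
Proof.
rewrite /cntR mulr_suml mulr_sumr -sumrB; apply: eq_bigr => k _.
rewrite mulr_sumr (bigD1 k) //= addrC -addrA.
suff -> : (x k == a)%:R * (x k == b)%:R - (a == b)%:R * (x k == a)%:R = 0 :> R.
  by rewrite addr0; apply: eq_bigr => k' _; rewrite -natrM mulnb.
case: (x k =P a) => [Ea|Na] /=; last by rewrite mul0r mulr0 subrr.
by rewrite Ea mul1r mulr1 subrr.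
Qed.

Lemma M2_invar (g : {ffun cf -> R}) (i0 i1 : 'I_N) a b :
  val i0 = 0%N -> val i1 = 1%N -> invar g ->
  \sum_x g x * (cntR x a * cntR x b - (a == b)%:R * cntR x a)
    = (N * N.-1)%:R * M2 g (a, b).
Proof.
move=> H0 H1 Hg.
have Hi : i0 != i1 by apply/eqP => /(congr1 val); rewrite H0 H1.
under eq_bigr do rewrite cnt2E mulr_sumr; rewrite exchange_big /=.
under eq_bigr => k _.
  under eq_bigr do rewrite mulr_sumr.
  rewrite exchange_big /=.
  under eq_bigr => k' Hk'.
    have [p [Hp0 Hp1]] : exists p : 'S_N, p i0 = k /\ p i1 = k'.
      by apply: perm2 => //; rewrite eq_sym.
    have -> : \sum_(x : cf) g x * ((x k == a) && (x k' == b))%:R =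
       \sum_(x : cf) g x * ((x i0 == a) && (x i1 == b))%:R.
      rewrite -(sum_invarF (fun y : cf => ((y i0 == a) && (y i1 == b))%:R) p Hg) /=.
      by apply: eq_bigr => x _; rewrite !ffunE Hp0 Hp1.
    over.
  over.
rewrite /= (M2E g a b H0 H1).
under eq_bigr do rewrite sumr_const cardC1 card_ord.
rewrite sumr_const card_ord -mulrnA mulr_natl mulnC; congr (_ *+ _).
by apply: eq_bigr => x _; rewrite mulrC.
Qed.

End P2.
Arguments cntR {R l N}.
Lemma sum_enum (R : realType) (T : finType) (F : T -> R) : \sum_i F i = \sum_(i <- enum T) F i.
Proof. by rewrite big_enum. Qed.

Lemma sum_count (R : realType) (T : eqType) (e : seq T) (P : pred T) :
  \sum_(i <- e) (P i)%:R = (count P e)%:R :> R.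
Proof. by elim: e => [|x e IH]; rewrite ?big_nil ?big_cons //= IH natrD. Qed.

Section P3.
Variables (R : realType) (l N : nat).
Local Notation cf := (cfg l N).

Definition dirac (z : cf) : {ffun cf -> R} := [ffun y => (y == z)%:R].

Lemma map_enum_inj (y z : cf) : map y (enum 'I_N) = map z (enum 'I_N) -> y = z.
Proof.
move=> H; apply/ffunP => i; have Hi : i \in enum 'I_N by rewrite mem_enum.
have := congr1 (fun s => nth (y i) s (index i (enum 'I_N))) H => /=.
by rewrite !(nth_map i) -?enumT ?index_mem ?nth_index.
Qed.

Lemma prodDirac_dirac (z : cf) s : map z (enum 'I_N) = s ->
  prodDirac R N s = dirac z.
Proof.
move=> Hs; apply/ffunP => y; rewrite !ffunE -Hs.
case: eqP => [/map_enum_inj -> | H]; first by rewrite eqxx.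
by case: eqP => // E; case: H; rewrite E.
Qed.

Lemma cfg_of_seq (a0 : 'I_l) (s : seq 'I_l) : size s = N ->
  exists z : cf, map z (enum 'I_N) = s.
Proof.
move=> Hs; exists [ffun i : 'I_N => nth a0 s i].
rewrite -[RHS](mkseq_nth a0) Hs /mkseq -val_enum_ord -map_comp.
by apply: eq_map => i /=; rewrite ffunE.
Qed.

Lemma cntR_count (z : cf) a : cntR z a = (count_mem a (map z (enum 'I_N)))%:R :> R.
Proof. rewrite /cntR (@sum_enum R) (@sum_count R _ _ (fun i => z i == a)). by rewrite [in RHS]count_map. Qed.

Lemma sum_dirac (z : cf) (F : cf -> R) : \sum_x dirac z x * F x = F z.
Proof.
rewrite (bigD1 z) //= ffunE eqxx mul1r big1 ?addr0 // => x /negbTE.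
by rewrite ffunE => ->; rewrite mul0r.
Qed.

Lemma P1N_multR (lam : {ffun 'I_l -> R}) a : (0 < N)%N -> P1N N lam ->
  (mult N lam a)%:R = lam a * N%:R.
Proof.
move=> HN [_ Hk]; rewrite /mult; have [k ->] := Hk a.
have HN0 : (N%:R : R) != 0 by rewrite pnatr_eq0 -lt0n.
by rewrite mulfVK // natrK.
Qed.

Lemma count_sorted (lam : {ffun 'I_l -> R}) a :
  count_mem a (sortedSeq N lam) = mult N lam a.
Proof.
rewrite /sortedSeq count_flatten -map_comp sumnE big_map big_enum /=.
under eq_bigr do rewrite count_nseq /=.
rewrite (bigD1 a) //= eqxx mul1n big1 ?addn0 // => i /negbTE.
by rewrite eq_sym => ->.
Qed.

Lemma size_sorted (lam : {ffun 'I_l -> R}) : (0 < N)%N -> P1N N lam ->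
  size (sortedSeq N lam) = N.
Proof.
move=> HN HP; apply/eqP; rewrite -(eqr_nat R).
rewrite /sortedSeq size_flatten /shape -map_comp sumnE big_map big_enum /=.
rewrite natr_sum.
under eq_bigr do rewrite size_nseq P1N_multR //.
by rewrite -mulr_suml (proj2 (proj1 HP)) mul1r.
Qed.

End P3.
Arguments dirac {R l N}.
Definition comb (R : realType) (l : nat) (T : finType) (S : seq {ffun 'I_l -> R})
  (alpha : {ffun 'I_l -> R} -> R) (f : {ffun 'I_l -> R} -> {ffun T -> R}) : {ffun T -> R} :=
  [ffun x => \sum_(lam <- S) alpha lam * f lam x].

Section P4.
Variables (R : realType) (l N : nat) (HN : (1 < N)%N).
Local Notation cf := (cfg l N).

Let HN0 : (0 < N)%N. Proof. exact: ltnW. Qed.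
Let i0 : 'I_N := Ordinal HN0.
Let i1 : 'I_N := Ordinal HN.
Let Hi0 : val i0 = 0%N. Proof. by []. Qed.
Let Hi1 : val i1 = 1%N. Proof. by []. Qed.
Let HNR : (N%:R : R) != 0. Proof. by rewrite pnatr_eq0 -lt0n. Qed.

Lemma P1N_cfg (lam : {ffun 'I_l -> R}) : P1N N lam ->
  exists z : cf, map z (enum 'I_N) = sortedSeq N lam.
Proof.
move=> HP; have Hs := size_sorted HN0 HP.
case Es: (sortedSeq N lam) Hs => [|a0 s'] Hs; first by move: HN0; rewrite -Hs.
by apply: (cfg_of_seq a0); rewrite Hs.
Qed.

Lemma psiN_ge0 (lam : {ffun 'I_l -> R}) (x : cf) : 0 <= psiN N lam x.
Proof.
rewrite /psiN symE mulr_ge0 ?invr_ge0 ?ler0n // sumr_ge0 // => s _.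
by rewrite ffunE; case: eqP.
Qed.

Lemma psiN_invar (lam : {ffun 'I_l -> R}) : invar (psiN N lam).
Proof. exact: sym_invar. Qed.

Lemma sum_psiN (lam : {ffun 'I_l -> R}) (z : cf) (F : cf -> R) :
  map z (enum 'I_N) = sortedSeq N lam ->
  (forall x s, F (pc x s) = F x) ->
  \sum_x psiN N lam x * F x = F z.
Proof.
move=> Hz HF; rewrite /psiN (@prodDirac_dirac R _ _ _ _ Hz) (sum_sym _ HF).
exact: sum_dirac.
Qed.

Lemma psiN_sum1 (lam : {ffun 'I_l -> R}) : P1N N lam -> \sum_x psiN N lam x = 1.
Proof.
move=> HP; have [z Hz] := P1N_cfg HP.
rewrite -(sum_psiN (F := fun _ => 1) Hz) //.
by apply: eq_bigr => x _; rewrite mulr1.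
Qed.

Lemma cntR_z (lam : {ffun 'I_l -> R}) (z : cf) a : P1N N lam ->
  map z (enum 'I_N) = sortedSeq N lam -> cntR z a = lam a * N%:R.
Proof.
by move=> HP Hz; rewrite cntR_count Hz count_sorted P1N_multR.
Qed.

Lemma M1_psiN (lam : {ffun 'I_l -> R}) : P1N N lam -> M1 (psiN N lam) = lam.
Proof.
move=> HP; have [z Hz] := P1N_cfg HP.
apply/ffunP => a.
have := M1_invar a Hi0 (psiN_invar lam).
rewrite (sum_psiN Hz) => [|x s]; last exact: cntR_pc.
rewrite (cntR_z _ HP Hz) => /(congr1 (fun t => t / N%:R)).
by rewrite mulfK // [N%:R * _]mulrC mulfK // => ->.
Qed.

Lemma M2_psiN (lam : {ffun 'I_l -> R}) : P1N N lam -> M2 (psiN N lam) = phiN N lam.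
Proof.
move=> HP; have [z Hz] := P1N_cfg HP.
apply/ffunP => -[a b].
have := M2_invar a b Hi0 Hi1 (psiN_invar lam).
rewrite (sum_psiN Hz) => [|x s]; last by rewrite !cntR_pc.
rewrite !(cntR_z _ HP Hz) natrM -subn1 natrB // => H.
have HN1 : (N%:R - 1 : R) != 0.
  by rewrite subr_eq0 pnatr_eq1; apply/eqP => H1; move: HN; rewrite H1.
apply: (mulfI (mulf_neq0 HNR HN1)); rewrite -H [phiN N lam (a, b)]ffunE /=.
field; exact: HN1.
Qed.

Lemma M1two_M2 (g : {ffun cf -> R}) : M1two (M2 g) = M1 g.
Proof.
apply/ffunP => a; rewrite ffunE (M1E g a Hi0).
under eq_bigr do rewrite (M2E g a _ Hi0 Hi1).
rewrite exchange_big /=; apply: eq_bigr => x _.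
rewrite -mulr_suml; congr (_ * _).
rewrite (bigD1 (x i1)) //= eqxx andbT big1 ?addr0 // => b /negbTE.
by rewrite eq_sym => ->; rewrite andbF.
Qed.

Lemma sumM1 (g : {ffun cf -> R}) : \sum_a M1 g a = \sum_x g x.
Proof.
under eq_bigr do rewrite (M1E g _ Hi0).
rewrite exchange_big /=; apply: eq_bigr => x _.
rewrite -mulr_suml (bigD1 (x i0)) //= eqxx big1 ?addr0 ?mul1r // => b /negbTE.
by rewrite eq_sym => ->.
Qed.

Lemma isProb_M2 (g : {ffun cf -> R}) : isProb g -> isProb (M2 g).
Proof.
move=> [Hg0 Hg1]; split.
  move=> p; rewrite ffunE; apply: sumr_ge0 => x _; exact: Hg0.
rewrite (eq_bigr (fun p => M2 g (p.1, p.2))); last by case.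
rewrite -(pair_bigA _ (fun a b => M2 g (a, b))) /=.
under eq_bigr => a _.
  have -> : \sum_(j < l) M2 g (a, j) = M1two (M2 g) a by rewrite ffunE.
  over.
by under eq_bigr do rewrite M1two_M2; rewrite sumM1.
Qed.

Lemma comb_lin (S : seq {ffun 'I_l -> R}) alpha (G : cf -> R) :
  \sum_x G x * comb S alpha (psiN N) x =
  \sum_(lam <- S) alpha lam * \sum_x G x * psiN N lam x.
Proof.
under eq_bigr do rewrite ffunE mulr_sumr.
rewrite exchange_big /=; apply: eq_bigr => lam _.
rewrite mulr_sumr; apply: eq_bigr => x _; ring.
Qed.

Lemma comb_Psym (ls : {ffun 'I_l -> R}) S alpha :
  (forall lam, lam \in S -> P1N N lam /\ 0 <= alpha lam) ->
  \sum_(lam <- S) alpha lam = 1 ->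
  (forall i, \sum_(lam <- S) alpha lam * lam i = ls i) ->
  Psym_at ls (comb S alpha (psiN N)).
Proof.
move=> HS H1 Hb; split; first split; first split.
- move=> x; rewrite ffunE big_seq; apply: sumr_ge0 => lam Hin.
  by apply: mulr_ge0; [exact: (proj2 (HS _ Hin)) | exact: psiN_ge0].
- transitivity (\sum_x 1 * comb S alpha (psiN N) x).
    by apply: eq_bigr => x _; rewrite mul1r.
  rewrite (comb_lin S alpha (fun _ => 1)) -[RHS]H1 big_seq [RHS]big_seq; apply: eq_bigr => lam Hin.
  under eq_bigr do rewrite mul1r.
  by rewrite psiN_sum1 ?mulr1 //; exact: (proj1 (HS _ Hin)).
- apply: sym_of_invar => x s; rewrite !ffunE; apply: eq_bigr => lam _.
  by rewrite psiN_invar.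
- apply/ffunP => a; rewrite (M1E _ a Hi0).
  have E := comb_lin S alpha (fun x => (x i0 == a)%:R); simpl in E.
  rewrite E -Hb big_seq [RHS]big_seq.
  apply: eq_bigr => lam Hin; congr (_ * _).
  by rewrite -{2}(M1_psiN (proj1 (HS _ Hin))) (M1E _ a Hi0).
Qed.

Lemma M2_comb (S : seq {ffun 'I_l -> R}) alpha :
  (forall lam, lam \in S -> P1N N lam) ->
  M2 (comb S alpha (psiN N)) = comb S alpha (phiN N).
Proof.
move=> HS; apply/ffunP => -[a b]; rewrite (M2E _ a b Hi0 Hi1) ffunE.
have E := comb_lin S alpha (fun x => ((x i0 == a) && (x i1 == b))%:R); simpl in E.
rewrite E.
rewrite big_seq [RHS]big_seq; apply: eq_bigr => lam Hin; congr (_ * _).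
by rewrite -(M2_psiN (HS _ Hin)) (M2E _ a b Hi0 Hi1).
Qed.

Lemma comb_Nrep (ls : {ffun 'I_l -> R}) S alpha :
  (forall lam, lam \in S -> P1N N lam /\ 0 <= alpha lam) ->
  \sum_(lam <- S) alpha lam = 1 ->
  (forall i, \sum_(lam <- S) alpha lam * lam i = ls i) ->
  Nrep_at N ls (comb S alpha (phiN N)).
Proof.
move=> HS H1 Hb; have [[Hg Hsym] HM1] := comb_Psym HS H1 Hb.
rewrite -M2_comb => [|lam /HS []//].
split; last by rewrite M1two_M2.
split; first exact: isProb_M2.
by exists (comb S alpha (psiN N)).
Qed.

End P4.
Lemma sum_seq_pred1 (R : realType) (T : eqType) (r : seq T) (i : T) (H : T -> R) :
  uniq r -> i \in r -> \sum_(j <- r) (i == j)%:R * H j = H i.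
Proof.
move=> Ur Hi; rewrite (big_rem i) //= eqxx mul1r big_seq big1 ?addr0 // => j Hj.
have : j != i by move: Hj; rewrite (mem_rem_uniq i Ur) => /andP [].
by rewrite eq_sym => /negbTE ->; rewrite mul0r.
Qed.

Section P5.
Variables (R : realType) (l N : nat) (HN : (1 < N)%N).
Local Notation cf := (cfg l N).

Let HN0 : (0 < N)%N. Proof. exact: ltnW. Qed.
Let i0 : 'I_N := Ordinal HN0.
Let Hi0 : val i0 = 0%N. Proof. by []. Qed.
Let HNR : (N%:R : R) != 0. Proof. by rewrite pnatr_eq0 -lt0n. Qed.

Definition emp (x : cf) : {ffun 'I_l -> R} := [ffun a => cntR x a / N%:R].

Lemma emp_P1N x : P1N N (emp x).
Proof.
split; first split.
- move=> a; rewrite ffunE divr_ge0 ?ler0n // sumr_ge0 // => i _; exact: ler0n.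
- under eq_bigr do rewrite ffunE.
  rewrite -mulr_suml /cntR exchange_big /=.
  under eq_bigr => i _.
    rewrite (bigD1 (x i)) //= eqxx big1 ?addr0; last by move=> a; rewrite eq_sym => /negbTE ->.
    over.
  by rewrite sumr_const card_ord -mulr_natl mulr1 mulfV.
- move=> a; exists (count_mem a (map x (enum 'I_N))).
  by rewrite ffunE cntR_count.
Qed.

Lemma dirac_pc (x : cf) p :
  dirac (pc x p) = [ffun y => dirac x (pc y (p^-1)%g)] :> {ffun cf -> R}.
Proof.
apply/ffunP => y; rewrite !ffunE.
have -> // : (pc y (p^-1)%g == x) = (y == pc x p).
apply/eqP/eqP => [<-|->]; first by rewrite pcM mulgV pc1.
by rewrite pcM mulVg pc1.
Qed.

Lemma sym_dirac (x : cf) : symmetrize (dirac x) = psiN N (emp x) :> {ffun cf -> R}.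
Proof.
have [z Hz] := P1N_cfg HN (emp_P1N x).
rewrite /psiN (@prodDirac_dirac R _ _ _ _ Hz).
have Hp : perm_eq (map z (enum 'I_N)) [tuple x i | i < N].
  apply/allP => a _ /=; apply/eqP.
  rewrite Hz count_sorted /=.
  apply/eqP; rewrite -(eqr_nat R) (P1N_multR _ HN0 (emp_P1N x)) ffunE mulfVK //.
  by rewrite cntR_count.
have [p Hpz] := tuple_permP Hp.
have -> : z = pc x p.
  apply: map_enum_inj; rewrite Hpz /=.
  by apply: eq_map => i; rewrite tnth_mktuple ffunE.
by rewrite dirac_pc sym_pre.
Qed.

Lemma g_decomp (g : {ffun cf -> R}) : symmetrize g = g ->
  forall y, g y = \sum_x g x * psiN N (emp x) y.
Proof.
move=> Hs y; rewrite -{1}Hs symE.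
under [in RHS]eq_bigr do rewrite -sym_dirac symE mulrCA.
rewrite -mulr_sumr; congr (_ * _).
under [RHS]eq_bigr do rewrite mulr_sumr.
rewrite [RHS]exchange_big /=; apply: eq_bigr => s _.
rewrite -[LHS](sum_dirac (pc y s) (fun x => g x)) /=.
by apply: eq_bigr => x _; rewrite !ffunE eq_sym mulrC.
Qed.

Definition Ug : seq {ffun 'I_l -> R} := undup (map emp (enum cf)).
Definition alg (g : {ffun cf -> R}) (lam : {ffun 'I_l -> R}) : R :=
  \sum_(x | emp x == lam) g x.

Lemma group (g : {ffun cf -> R}) (G : {ffun 'I_l -> R} -> R) :
  \sum_x g x * G (emp x) = \sum_(lam <- Ug) alg g lam * G lam.
Proof.
rewrite /alg.
under [RHS]eq_bigr do rewrite big_mkcond mulr_suml.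
rewrite exchange_big /=; apply: eq_bigr => x _.
rewrite -(@sum_seq_pred1 R _ Ug (emp x) (fun lam => g x * G lam) (undup_uniq _)); last first.
  by rewrite mem_undup; apply: map_f; rewrite mem_enum.
by apply: eq_bigr => lam _; case: eqP => _; rewrite ?mul1r ?mul0r.
Qed.

Lemma decomp (ls : {ffun 'I_l -> R}) (g : {ffun cf -> R}) : Psym_at ls g ->
  exists S alpha, [/\ uniq S,
    (forall lam, lam \in S -> P1N N lam /\ 0 <= alpha lam),
    \sum_(lam <- S) alpha lam = 1,
    (forall i, \sum_(lam <- S) alpha lam * lam i = ls i)
    & g = comb S alpha (psiN N)].
Proof.
move=> [[[Hg0 Hg1] Hs] HM].
exists Ug, (alg g); split.
- exact: undup_uniq.
- move=> lam; rewrite mem_undup => /mapP [x _ ->]; split; first exact: emp_P1N.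
  by apply: sumr_ge0 => y _; exact: Hg0.
- have E := group g (fun _ => 1); simpl in E.
  rewrite -Hg1; under eq_bigr do rewrite -[alg g _]mulr1.
  by rewrite -E; under eq_bigr do rewrite mulr1.
- move=> i; rewrite -(group g (fun lam => lam i)) -HM.
  apply: (mulfI HNR); rewrite -(M1_invar i Hi0 (invar_of_sym Hs)) mulr_sumr.
  by apply: eq_bigr => x _; rewrite ffunE; field.
- apply/ffunP => y; rewrite (g_decomp Hs y) ffunE.
  exact: (group g (fun lam => psiN N lam y)).
Qed.

End P5.
Section P6.
Variables (R : realType) (l N : nat) (ls : {ffun 'I_l -> R}).
Variables (T : finType) (f : {ffun 'I_l -> R} -> {ffun T -> R})
  (C : {ffun T -> R} -> Prop).
Local Notation lamT := {ffun 'I_l -> R}.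

Definition goodS (S : seq lamT) (alpha : lamT -> R) :=
  [/\ uniq S, (forall lam, lam \in S -> P1N N lam /\ 0 <= alpha lam),
      \sum_(lam <- S) alpha lam = 1
    & forall i, \sum_(lam <- S) alpha lam * lam i = ls i].

Hypothesis HC : forall S alpha, goodS S alpha -> C (comb S alpha f).

Lemma step (S : seq lamT) alpha (y : {ffun T -> R}) :
  extreme C y -> goodS S alpha -> y = comb S alpha f -> (l < size S)%N ->
  exists S' alpha', [/\ goodS S' alpha', y = comb S' alpha' f & (size S' < size S)%N].
Proof.
move=> Hext [US HS H1 Hb] Hy Hlt.
set m := size S.
pose d : lamT := [ffun=> 0].
pose v (k : 'I_m) := nth d S k.
have vS k : v k \in S by apply: mem_nth; exact: ltn_ord.
have sumS (H : lamT -> R) : \sum_(lam <- S) H lam = \sum_(k < m) H (v k).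
  by rewrite (big_nth d) big_mkord.
pose M : 'M[R]_(m, l) := \matrix_(k, i) v k i.
have Hker : kermx M != 0.
  rewrite kermx_eq0 /row_free; apply/negP => /eqP H.
  by have := rank_leq_col M; rewrite H leqNgt Hlt.
have [[k1 j] /= Hj] : exists kj : 'I_m * 'I_m, kermx M kj.1 kj.2 != 0.
  case: (pickP (fun kj : 'I_m * 'I_m => kermx M kj.1 kj.2 != 0)) => [kj Hkj|H0].
    by exists kj.
  case/negP: Hker; apply/eqP/matrixP => a c; move: (H0 (a, c)) => /= /negbFE/eqP ->.
  by rewrite mxE.
pose b (k : 'I_m) : R := kermx M k1 k.
have Hb0 i : \sum_k b k * v k i = 0.
  have E := congr1 (fun A : 'M[R]_(m, l) => A k1 i) (mulmx_ker M).
  rewrite /= !mxE in E; rewrite -[RHS]E.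
  by apply: eq_bigr => k _; rewrite /M [X in _ = _ * X]mxE.
have Hv1 k : \sum_i v k i = 1 by have [[[_ ->]]] := HS _ (vS k).
have Hb1 : \sum_k b k = 0.
  transitivity (\sum_k b k * \sum_i v k i).
    by apply: eq_bigr => k _; rewrite Hv1 mulr1.
  under eq_bigr do rewrite mulr_sumr.
  by rewrite exchange_big /= big1 // => i _; rewrite Hb0.
pose be lam := \sum_k (v k == lam)%:R * b k.
have bev k : be (v k) = b k.
  rewrite /be (bigD1 k) //= eqxx mul1r big1 ?addr0 // => j' Hj'.
  rewrite (_ : (v j' == v k) = false) ?mul0r //; apply/negbTE.
  by rewrite /v nth_uniq ?ltn_ord.
have sumbe (H : lamT -> R) : \sum_(lam <- S) be lam * H lam = \sum_k b k * H (v k).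
  by rewrite sumS; apply: eq_bigr => k _; rewrite bev.
have sbe : \sum_(lam <- S) be lam = 0.
  transitivity (\sum_(lam <- S) be lam * 1); first by apply: eq_bigr => ? _; rewrite mulr1.
  by rewrite sumbe; under eq_bigr do rewrite mulr1; exact: Hb1.
have [k0 Pk0 Hmin] := @arg_minP _ R _ j (fun k => b k != 0) (fun k => alpha (v k) / `|b k|) Hj.
pose eps := alpha (v k0) / `|b k0|.
have Hal k : 0 <= alpha (v k) by have [] := HS _ (vS k).
have Hbk0 : 0 < `|b k0| by rewrite normr_gt0.
have Heps0 : 0 <= eps by rewrite divr_ge0 // normr_ge0.
have Hpos k : eps * `|b k| <= alpha (v k).
  case: (eqVneq (b k) 0) => [->|Hk]; first by rewrite normr0 mulr0.
  by have := Hmin k Hk; rewrite ler_pdivlMr ?normr_gt0.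
have Heq0 : eps * `|b k0| = alpha (v k0) by rewrite /eps mulfVK // normr_eq0.
pose alc (c : R) lam := alpha lam + c * eps * be lam.
have Halc c : `|c| <= 1 -> forall lam, lam \in S -> P1N N lam /\ 0 <= alc c lam.
  move=> Hc lam Hin; split; first exact: (proj1 (HS _ Hin)).
  have Hk : (index lam S < m)%N by rewrite index_mem.
  have Hl : lam = v (Ordinal Hk) by rewrite /v /= nth_index.
  rewrite /alc Hl bev.
  have h1 : - (c * eps * b (Ordinal Hk)) <= `|c * eps * b (Ordinal Hk)|.
    by rewrite -normrN ler_norm.
  rewrite (normrM (c * eps)) (normrM c eps) (ger0_norm Heps0) in h1.
  have h2 : `|c| * eps * `|b (Ordinal Hk)| <= eps * `|b (Ordinal Hk)|.
    by rewrite -mulrA ler_piMl // mulr_ge0 // normr_ge0.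
  have := Hpos (Ordinal Hk); lra.
have Halc1 c : \sum_(lam <- S) alc c lam = 1.
  by rewrite big_split /= -mulr_sumr sbe mulr0 addr0.
have Halcb c i : \sum_(lam <- S) alc c lam * lam i = ls i.
  under eq_bigr do rewrite mulrDl -mulrA.
  by rewrite big_split /= -mulr_sumr (sumbe (fun lam => lam i)) Hb0 mulr0 addr0 Hb.
pose D x := \sum_(lam <- S) be lam * f lam x.
have combE c x : comb S (alc c) f x = y x + c * eps * D x.
  rewrite Hy !ffunE mulr_sumr -big_split /=; apply: eq_bigr => lam _.
  by rewrite /alc; ring.
have Hgood c : `|c| <= 1 -> goodS S (alc c).
  by move=> Hc; split => //; exact: Halc.
have HD x : eps * D x = 0.
  have G1 : goodS S (alc 1) by apply: Hgood; rewrite normr1.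
  have G2 : goodS S (alc (-1)) by apply: Hgood; rewrite normrN1.
  have H2 : 0 < (2^-1 : R) < 1.
    by apply/andP; split; [rewrite invr_gt0 ltr0n | rewrite invf_lt1 // ltr1n].
  have E := Hext.2 _ _ (2^-1) (HC G1) (HC G2) H2.
  have E1 : forall x, y x = 2^-1 * comb S (alc 1) f x + (1 - 2^-1) * comb S (alc (-1)) f x.
    by move=> x'; rewrite !combE; field.
  have E2 := E E1.
  have := congr1 (fun g : {ffun T -> R} => g x) E2; rewrite /= !combE => E3.
  have : 2 * (eps * D x) = 0 by lra.
  by move/eqP; rewrite mulf_eq0 pnatr_eq0 orFb => /eqP.
pose c0 : R := if b k0 < 0 then 1 else -1.
have Hc0 : `|c0| <= 1 by rewrite /c0; case: ifP => _; rewrite ?normrN1 ?normr1.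
have Hz0 : alc c0 (v k0) = 0.
  rewrite /alc bev /c0 -Heq0; case: ltrP => h.
    by rewrite ltr0_norm //; ring.
  by rewrite ger0_norm //; ring.
have Hy0 : y = comb S (alc c0) f.
  by apply/ffunP => x; rewrite combE -mulrA HD mulr0 addr0.
have remS (G : lamT -> R) : \sum_(lam <- rem (v k0) S) alc c0 lam * G lam
    = \sum_(lam <- S) alc c0 lam * G lam.
  by rewrite [RHS](big_rem (v k0)) //= Hz0 mul0r add0r.
exists (rem (v k0) S), (alc c0); split.
- split.
  + exact: rem_uniq.
  + by move=> lam /mem_rem; apply: Halc.
  + transitivity (\sum_(lam <- rem (v k0) S) alc c0 lam * 1).
      by apply: eq_bigr => ? _; rewrite mulr1.
    by rewrite remS; under eq_bigr do rewrite mulr1; exact: Halc1.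
  + by move=> i; rewrite remS.
- by rewrite Hy0; apply/ffunP => x; rewrite !ffunE remS.
- by rewrite size_rem // prednK // (leq_ltn_trans _ Hlt).
Qed.

Lemma carath (y : {ffun T -> R}) : extreme C y ->
  forall n S alpha, (size S <= n)%N -> goodS S alpha -> y = comb S alpha f ->
  exists S' alpha', admissible N ls S' alpha' /\
    forall x, y x = \sum_(lam <- S') alpha' lam * f lam x.
Proof.
move=> Hext; elim=> [|n IH] S alpha Hn Hg Hy.
  exists S, alpha; case: Hg => US HS H1 Hb; split.
    by split=> //; rewrite (leq_trans Hn).
  by move=> x; rewrite Hy ffunE.
case: (leqP (size S) l) => Hl.
  exists S, alpha; case: Hg => US HS H1 Hb; split; first by split.
  by move=> x; rewrite Hy ffunE.
have [S' [alpha' [Hg' Hy' Hs']]] := step Hext Hg Hy Hl.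
apply: (IH S' alpha') => //.
by rewrite -ltnS (leq_trans Hs').
Qed.

End P6.
Theorem lemma5p1 (R : realType) (l N : nat) (ls : {ffun 'I_l -> R}) :
  (2 <= N)%N -> isProb ls ->
  ((forall g : {ffun cfg l N -> R}, extreme (Psym_at ls) g -> SAE_at ls g) /\
   (forall g : {ffun cfg l N -> R}, SAE_at ls g -> Psym_at ls g)) /\
  ((forall mu : {ffun 'I_l * 'I_l -> R}, extreme (Nrep_at N ls) mu -> NSAE_at N ls mu) /\
   (forall mu : {ffun 'I_l * 'I_l -> R}, NSAE_at N ls mu -> Nrep_at N ls mu)).
Proof.
move=> HN _; split; split.
- move=> g Hext.
  have [S [alpha [US HS H1 Hb Hg]]] := decomp HN (proj1 Hext).
  have HC : forall S alpha, goodS N ls S alpha -> Psym_at ls (comb S alpha (psiN N)).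
    by move=> S' a' [? ? ? ?]; apply: comb_Psym.
  have [S' [alpha' [Had Hy]]] := carath HC Hext (leqnn _) (And4 US HS H1 Hb) Hg.
  by exists S', alpha'.
- move=> g [S [alpha [[US Hsz HS H1 Hb] Hg]]].
  have -> : g = comb S alpha (psiN N) by apply/ffunP => x; rewrite Hg ffunE.
  exact: comb_Psym.
- move=> mu Hext.
  have [[_ [g [Hg HM2]]] HM1] := proj1 Hext.
  have Hgs : Psym_at ls g by split => //; rewrite -HM1 -HM2 M1two_M2.
  have [S [alpha [US HS H1 Hb Hgc]]] := decomp HN Hgs.
  have Hmu : mu = comb S alpha (phiN N).
    by rewrite -HM2 Hgc M2_comb // => lam /HS [].
  have HC : forall S alpha, goodS N ls S alpha -> Nrep_at N ls (comb S alpha (phiN N)).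
    by move=> S' a' [? ? ? ?]; apply: comb_Nrep.
  have [S' [alpha' [Had Hy]]] := carath HC Hext (leqnn _) (And4 US HS H1 Hb) Hmu.
  by exists S', alpha'.
- move=> mu [S [alpha [[US Hsz HS H1 Hb] Hmu]]].
  have -> : mu = comb S alpha (phiN N) by apply/ffunP => x; rewrite Hmu ffunE.
  exact: comb_Nrep.
Qed.
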